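(* Let $Q\subset\mathbb{C}$ be an unshielded continuum with finest map $\varphi$ onto a locally connected continuum. If $a\in Q$ satisfies $\varphi^{-1}(\varphi(a))=\{a\}$, then $Q$ is locally connected at $a$.
   Context: $Q$ is unshielded if it equals the boundary of the component of $\widehat{\mathbb{C}}\setminus Q$ containing $\infty$. The finest map $\varphi$ of $Q$ is the monotone (continuous, connected fibers) surjection onto a locally connected continuum through which every monotone surjection of $Q$ onto a locally connected continuum factors via a monotone map. *)

(* Defs.v *)
(* The complex plane C is modelled as R * R
   (product topology) for an arbitrary R : realType. *)
From HB Require Import structures.
From mathcomp Require Import all_boot all_order all_algebra.
From mathcomp Require Import all_classical all_reals all_analysis.
Import numFieldNormedType.Exports.
Set Implicit Arguments. Unset Strict Implicit. Unset Printing Implicit Defensive.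
Local Open Scope classical_set_scope.
Local Open Scope ring_scope.

Section TopDefs.
Context {T : topologicalType}.

Definition continuum (A : set T) : Prop :=
  A !=set0 /\ compact A /\ connected A.

Definition open_in (A B : set T) : Prop :=
  exists W : set T, open W /\ B = A `&` W.

Definition locally_connected_at (A : set T) (a : T) : Prop :=
  forall U : set T, nbhs a U ->
    exists V : set T, [/\ open_in A V, connected V, V a & V `<=` U].

Definition locally_connected_set (A : set T) : Prop :=
  forall a, A a -> locally_connected_at A a.

Definition boundary (A : set T) : set T := closure A `\` interior A.

End TopDefs.

Definition monotone_onto {T U : topologicalType} (A : set T) (B : set U)
    (f : T -> U) : Prop :=
  [/\ {within A, continuous f}, f @` A = B &
      forall y, B y -> connected (A `&` f @^-1` [set y])].

(* Q is unshielded: Q is the boundary of the unbounded component of C \ Q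
   (i.e. of the component of the Riemann sphere minus Q containing oo) *)
Definition unshielded {R : realType} (Q : set (R * R)%type) : Prop :=
  exists x : (R * R)%type,
    ~ Q x /\ ~ bounded_set (connected_component (~` Q) x) /\
    Q = boundary (connected_component (~` Q) x).

Definition lc_continuum {R : realType} {Y : pseudoMetricType R} (Z : set Y)
  : Prop := hausdorff_space Y /\ continuum Z /\ locally_connected_set Z.

Definition finest_map {R : realType} {T : topologicalType} (Q : set T)
    {Y : pseudoMetricType R} (Z : set Y) (phi : T -> Y) : Prop :=
  lc_continuum Z /\ monotone_onto Q Z phi /\
  forall (Y' : pseudoMetricType R) (Z' : set Y') (psi : T -> Y'),
    lc_continuum Z' -> monotone_onto Q Z' psi ->
    exists h : Y -> Y', monotone_onto Z Z' h /\
                        forall x, Q x -> psi x = h (phi x).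

(* Main.v *)
Require Import Defs.
From HB Require Import structures.
From mathcomp Require Import all_boot all_order all_algebra.
From mathcomp Require Import all_classical all_reals all_analysis.
Import numFieldNormedType.Exports.
Local Open Scope classical_set_scope.
Local Open Scope ring_scope.

Lemma img_closed (T Y : topologicalType) (Q D : set T) (phi : T -> Y) :
  hausdorff_space Y -> compact Q -> closed D -> {within Q, continuous phi} ->
  closed (phi @` (Q `&` D)).
Proof.
move=> hY cQ cD ct; apply: compact_closed => //; apply: continuous_compact.
  by apply: continuous_subspaceW ct => x [].
exact: compact_closedI.
Qed.

Lemma connected_preimage (T Y : topologicalType) (Q : set T) (Z V : set Y)
  (phi : T -> Y) : hausdorff_space Y -> compact Q ->
  {within Q, continuous phi} -> phi @` Q = Z ->
  (forall y, Z y -> connected (Q `&` phi @^-1` [set y])) ->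
  V `<=` Z -> connected V -> connected (Q `&` phi @^-1` V).
Proof.
move=> hY cQ ct im fib VZ cV B B0 [C oC BC] [D cD BD].
have sat : forall x y, (Q `&` phi @^-1` V) x -> B y -> phi x = phi y -> B x.
  move=> x y [Qx Vx] By exy.
  have [Qy Vy] : (Q `&` phi @^-1` V) y by rewrite BC in By; case: By.
  have Zy : Z (phi y) by rewrite -im; exists y.
  set F := Q `&` phi @^-1` [set phi y].
  have FV : F `<=` Q `&` phi @^-1` V by move=> z [Qz /= ->].
  have := fib _ Zy (F `&` B); rewrite -/F.
  have -> : F `&` B = F `&` C.
    by rewrite BC setIA; congr (_ `&` _); apply/setIidl.
  have By' := By; rewrite BC in By'; case: By' => _ Cy.
  move=> /(_ _ _ _)/(congr1 (fun S => S x)) H.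
  have : (F `&` C) x.
    rewrite H; first by split.
    - by exists y; split => //; split.
    - by exists C.
    - exists D => //.
      have -> : F `&` C = F `&` B.
        by rewrite BC setIA; congr (_ `&` _); apply/esym/setIidl.
      by rewrite BD setIA; congr (_ `&` _); apply/setIidl.
  by case=> Fx Cx; rewrite BC; split => //; split.
have BV : B `<=` Q `&` phi @^-1` V by rewrite BC => z [].
have key : phi @` B = V.
  apply: cV.
  - by case: B0 => y By; exists (phi y), y.
  - exists (~` (phi @` (Q `&` ~` C))).
      by apply: closed_openC; apply: img_closed => //; apply: open_closedC.
    apply/seteqP; split.
      move=> _ [y By <-]; split; first by case: (BV _ By).
      move=> [w [Qw nCw] ew]; apply: nCw.
      have Bw : B w.
        apply: (sat w y) => //; split => //; rewrite /preimage /= ew.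
        by case: (BV _ By).
      by rewrite BC in Bw; case: Bw.
    move=> z [Vz nz]; have [w Qw wz] : (phi @` Q) z by rewrite im; apply: VZ.
    have [Cw|nCw] := pselect (C w).
      by exists w => //; rewrite BC; split => //; split => //; rewrite /preimage /= wz.
    by exfalso; apply: nz; exists w.
  - exists (phi @` (Q `&` D)); first exact: img_closed.
    apply/seteqP; split.
      move=> _ [y By <-]; split; first by case: (BV _ By).
      by exists y => //; rewrite BD in By; case: By => -[].
    move=> z [Vz [w [Qw Dw] wz]]; exists w => //.
    by rewrite BD; split => //; split => //; rewrite /preimage /= wz.
apply/seteqP; split => // x V'x.
have [y By eyx] : (phi @` B) (phi x) by rewrite key; case: V'x.
exact: (sat x y).
Qed.

Theorem lemma3p7 (R : realType) (Q : set (R * R)%type)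
    (Y : pseudoMetricType R) (Z : set Y) (phi : (R * R)%type -> Y) :
  continuum Q -> unshielded Q -> finest_map Q Z phi ->
  forall a : (R * R)%type, Q a ->
    Q `&` phi @^-1` [set phi a] = [set a] ->
    locally_connected_at Q a.
Proof.
move=> [_ [cQ _]] _ [[hY [_ lcZ]] [[ct im fib] _]] a Qa fa U nU.
set U0 := U°.
set W := ~` (phi @` (Q `&` ~` U0)).
have oW : open W.
  apply: closed_openC; apply: img_closed => //; apply: open_closedC.
  exact: open_interior.
have Wa : W (phi a).
  move=> [w [Qw nU0w] ew]; apply: nU0w.
  have : (Q `&` phi @^-1` [set phi a]) w by split.
  by rewrite fa => ->.
have Za : Z (phi a) by rewrite -im; exists a.
have := lcZ _ Za W (open_nbhs_nbhs (conj oW Wa)).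
case=> V; case=> oV cV Va VW; case: oV => O1; case=> oO VO.
have VZ : V `<=` Z by rewrite VO => z [].
exists (Q `&` phi @^-1` V); split.
- have := (proj1 (continuousP (phi : subspace Q -> Y)) ct O1 oO).
  case/open_subspaceP => G oG GQ; exists G; split => //.
  rewrite [Q `&` G]setIC GQ VO; apply/seteqP; split.
    by move=> x [Qx [Zx Ox]]; split.
  move=> x [Ox Qx]; split=> //; split=> //; rewrite -im; exists x => //.
- have H := (@connected_preimage _ _ Q Z V phi hY cQ ct im fib VZ cV); exact: H.
- split; [exact: Qa | exact: Va].
- move=> x [Qx Vx]; have [U0x|nU0x] := pselect (U0 x).
    by apply: nbhs_singleton; exact: U0x.
  by exfalso; apply: (VW _ Vx); exists x.
Qed.
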